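(* Let $m$ be a positive integer. Then \[ \sum_L\mathbf r_L=\bigl(1-\mathbf h_1+\mathbf h_m-\mathbf h_{m+1}+\mathbf h_{2m}-\cdots\bigr)^{-1}=\Bigl(\sum_{n\ge0}(\mathbf h_{mn}-\mathbf h_{mn+1})\Bigr)^{-1}, \] where the sum on the left is over all compositions $L$ (including the empty one) with all parts less than $m$.
   Context: In $F\langle\langle X_1,X_2,\dots\rangle\rangle$ ($F$ a field of characteristic $0$, noncommuting variables), $\mathbf h_n=\sum_{i_1\le\cdots\le i_n}X_{i_1}\cdots X_{i_n}$ ($\mathbf h_0=1$), and for a composition $L=(L_1,\dots,L_k)$ of $n$, $\mathbf r_L=\sum X_{i_1}\cdots X_{i_n}$ over $(i_1,\dots,i_n)$ weakly increasing within consecutive blocks of lengths $L_1,\dots,L_k$ and strictly decreasing between consecutive blocks ($i_{L_1+\cdots+L_j}>i_{L_1+\cdots+L_j+1}$); $\mathbf r_\emptyset=1$. *)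

(* Defs.v *)
From HB Require Import structures.
From mathcomp Require Import all_boot all_order all_algebra.
Set Implicit Arguments. Unset Strict Implicit. Unset Printing Implicit Defensive.
Import Order.TTheory GRing.Theory Num.Theory.
Local Open Scope ring_scope.

(* Formal power series in noncommuting variables X_1, X_2, ... over F.
   Variable X_(i+1) is encoded by the natural number i (order preserving),
   a monomial X_{i_1}...X_{i_n} by the word [:: i_1 - 1; ...; i_n - 1],
   and a series by its coefficient function on words. *)
Definition series (F : fieldType) := seq nat -> F.

Definition smul (F : fieldType) (f g : series F) : series F :=
  fun w => \sum_(i < (size w).+1) f (take i w) * g (drop i w).

Definition sone (F : fieldType) : series F := fun w => (w == [::])%:R.

Definition hser (F : fieldType) (n : nat) : series F :=
  fun w => ((size w == n) && sorted leq w)%:R.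

(* r_L: words of length |L| that are weakly increasing inside the consecutive
   blocks of lengths L_1, ..., L_k and strictly decreasing across consecutive
   blocks (last letter of a block > first letter of the next block). *)
Definition rser (F : fieldType) (L : seq nat) : series F :=
  fun w => let bs := reshape L w in
    [&& size w == sumn L, all (sorted leq) bs &
        sorted (fun b c => head 0%N c < last 0%N b)%N bs]%:R.

Fixpoint compsF (fuel n : nat) : seq (seq nat) :=
  match fuel with
  | 0 => if n == 0%N then [:: [::]] else [::]
  | f.+1 => if n == 0%N then [:: [::]] else
      flatten [seq [seq i.+1 :: L | L <- compsF f (n - i.+1)] | i <- iota 0 n]
  end.
Definition compositions (n : nat) : seq (seq nat) := compsF n n.

(* sum_L r_L over all compositions L (incl. the empty one) with all parts < m.
   Since r_L is homogeneous of degree |L|, the coefficient of w only gets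
   contributions from compositions of size w. *)
Definition sum_rL (F : fieldType) (m : nat) : series F :=
  fun w => \sum_(L <- compositions (size w) | all (fun p => p < m)%N L) rser F L w.

(* sum_{n >= 0} (h_{mn} - h_{mn+1}) for m >= 1: the n-th term has order
   >= n, so only n <= size w contribute to the coefficient of w. *)
Definition sum_hdiff (F : fieldType) (m : nat) : series F :=
  fun w => \sum_(n < (size w).+1) (hser F (m * n) w - hser F (m * n).+1 w).

(* Main.v *)
Require Import Defs.
From HB Require Import structures.
From mathcomp Require Import all_boot all_order all_algebra zify ring.
Import GRing.Theory.

Module MA.
Set Implicit Arguments. Unset Strict Implicit. Unset Printing Implicit Defensive.
Import GRing.Theory.

Fixpoint runs (w : seq nat) : seq nat :=
  match w with
  | [::] => [::]
  | x :: s => match s with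
     | [::] => [:: 1%N]
     | y :: _ => if (x <= y)%N then (head 0%N (runs s)).+1 :: behead (runs s)
                 else 1%N :: runs s
     end
  end.

Lemma runsE x y s : runs [:: x, y & s] =
  if (x <= y)%N then (head 0%N (runs (y :: s))).+1 :: behead (runs (y :: s))
  else 1%N :: runs (y :: s).
Proof. by []. Qed.

Lemma runs_nil w : (runs w == [::]) = (w == [::]).
Proof. case: w => [|x [|y s]] //=; by case: ifP. Qed.

Lemma runs_pos w : all (fun a => 0 < a)%N (runs w).
Proof.
elim: w => [|x [|y s] IH] //; rewrite runsE; move: IH.
case: (runs (y :: s)) => [|a l]; case: ifP => //= _ /andP[].
by [].
Qed.

Lemma runs_sorted u : u != [::] -> sorted leq u -> runs u = [:: size u].
Proof.
elim: u => [|x [|y s] IH] // _ /andP[xy Hs].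
by rewrite runsE xy IH.
Qed.

Lemma runs_cat p v : (p == [::]) || (v == [::]) || (head 0%N v < last 0%N p)%N ->
  runs (p ++ v) = runs p ++ runs v.
Proof.
case: v => [|z v]; first by rewrite !cats0.
case: p => [|x p] // H; have {}H : (z < last x p)%N := H.
elim: p x H => [|y p IH] x H; first by rewrite cat1s runsE leqNgt H.
rewrite !cat_cons runsE -cat_cons IH // runsE.
case E: (runs (y :: p)) => [|a l]; first by move: (runs_nil (y :: p)); rewrite E.
by case: ifP.
Qed.

Lemma first_run w : w != [::] -> exists u v, [/\ w = u ++ v, u != [::], sorted leq u &
  (v == [::]) || (head 0%N v < last 0%N u)%N].
Proof.
elim: w => [|x w IH] // _; case: w IH => [|y w] IH.
  by exists [:: x], [::].
have [u [v [E un su hv]]] := IH isT.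
case: (leqP x y) => xy.
  case: u E un su hv => [|z u] // E _ su hv.
  exists [:: x, z & u], v; split => //; first by rewrite E.
  by move: E su => [<- _] /= ->; rewrite xy.
by exists [:: x], (y :: w).
Qed.

Lemma last_run w : w != [::] -> exists p r, [/\ w = p ++ r, r != [::], sorted leq r &
  (p == [::]) || (head 0%N r < last 0%N p)%N].
Proof.
elim: w => [|x w IH] // _; case: w IH => [|y w] IH.
  by exists [::], [:: x].
have [p [r [E rn sr hp]]] := IH isT.
case: p E hp => [|z p] E hp.
  rewrite /= in E; subst r.
  case: (leqP x y) => xy.
    by exists [::], [:: x, y & w]; split => //=; rewrite xy.
  by exists [:: x], [:: y & w].
exists [:: x, z & p], r; split => //=; by rewrite E.
Qed.

End MA.
Import MA.

Module MB.
Set Implicit Arguments. Unset Strict Implicit. Unset Printing Implicit Defensive.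
Import GRing.Theory.
Local Open Scope ring_scope.

Definition rel0 (b c : seq nat) := (head 0%N c < last 0%N b)%N.
Definition cond (L w : seq nat) : bool := [&& size w == sumn L, all (sorted leq) (reshape L w)
  & sorted rel0 (reshape L w)].

Lemma rserE (F : fieldType) L w : rser F L w = (cond L w)%:R.
Proof. by []. Qed.

Lemma head_take b (s : seq nat) : (0 < b)%N -> head 0%N (take b s) = head 0%N s.
Proof. by case: b => // b; case: s. Qed.

Lemma cond_runs L w : all (fun a => 0 < a)%N L -> cond L w -> L = runs w.
Proof.
elim: L w => [|a L IH] w.
  by rewrite /cond /= => _ /andP[/eqP/size0nil -> _].
rewrite /cond /= => /andP[a0 pL] /and3P[/eqP sw /andP[st sr] pth].
have d := cat_take_drop a w.
have HL : cond L (drop a w).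
  by rewrite /cond size_drop sw addKn eqxx sr (path_sorted pth).
rewrite (IH _ pL HL) -{2}d runs_cat.
  rewrite (@runs_sorted (take a w)) // ?size_takel ?sw ?leq_addr //.
  by rewrite -size_eq0 size_takel ?sw ?leq_addr // -lt0n.
case E: (drop a w) => [|z v]; first by rewrite orbT.
apply/orP; right.
move: HL pth; rewrite /cond E; clear IH sw sr; case: L pL => [|b L] //= /andP[b0 _].
move=> /and3P[/eqP sv _ _] /andP[]; rewrite /rel0 head_take //.
Qed.

Lemma cond_runs2 w : cond (runs w) w.
Proof.
elim: {w}(size w) {-2}w (leqnn (size w)) => [|n IH] w.
  by rewrite leqn0 => /nilP ->.
case: (eqVneq w [::]) => [-> //|wn sw].
have [u [v [E un su hv]]] := first_run wn.
have sv : (size v <= n)%N.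
  move: sw un; rewrite E size_cat -size_eq0; case: (size u) => // k sw _.
  by apply: leq_trans (leq_addl k _) _; rewrite -ltnS -addSn.
have /and3P[/eqP s1 s2 s3] := IH v sv.
rewrite E runs_cat; last by rewrite -orbA hv orbT.
rewrite (runs_sorted un su) /cond /= take_size_cat // drop_size_cat //.
rewrite size_cat s1 eqxx su s2 /=.
case: (eqVneq v [::]) hv s3 s1 => [-> //|vn /= hv].
have := runs_pos v; case E2: (runs v) => [|b L] //.
move=> /andP[b0 _] s3 _ /=; rewrite {1}/rel0 head_take // hv.
exact: s3.
Qed.

End MB.
Import MB.

Module MC.
Set Implicit Arguments. Unset Strict Implicit. Unset Printing Implicit Defensive.

Lemma sumn_pick (s : seq nat) j X : uniq s ->
  sumn [seq (i == j) * X i | i <- s] = (j \in s) * X j.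
Proof.
elim: s => [|i s IH] //= /andP[ni us]; rewrite IH // in_cons.
case: (eqVneq i j) => [<-|_] /=; last by [].
by rewrite (negbTE ni) mul0n addn0 mul1n.
Qed.

Lemma count0 (T : Type) (a : pred T) s : (forall x, ~~ a x) -> count a s = 0.
Proof. by move=> H; elim: s => //= x s ->; rewrite (negbTE (H x)). Qed.

Lemma sumn0_pos L : all (fun a => 0 < a) L -> (sumn L == 0) = (L == [::]).
Proof. by case: L => //= a L /andP[a0 _]; rewrite addn_eq0 eqn0Ngt a0. Qed.

Lemma comps_count f n L : n <= f ->
  count_mem L (compsF f n) = (all (fun a => 0 < a) L && (sumn L == n)).
Proof.
have base : forall L, count_mem L [:: [::]] = (all (fun a => 0 < a) L && (sumn L == 0)).
  case=> [|a L'] //=; case: (ltnP 0 a) => //= a0.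
  by rewrite addn_eq0 eqn0Ngt a0 andbF.
elim: f n L => [|f IH] n L.
  by rewrite leqn0 => /eqP ->; apply: base.
move=> nf /=; case: (eqVneq n 0) => [->|n0]; first exact: base.
rewrite count_flatten -map_comp.
case: L => [|a L].
  rewrite /= (eqn_leq 0 n) leqn0 (negbTE n0) andbF.
  elim: (iota 0 n) => //= i s ->; rewrite count_map addn0.
  by apply: count0.
case: a => [|j].
  rewrite /=.
  elim: (iota 0 n) => //= i s ->; rewrite count_map addn0.
  by apply: count0.
have -> : [seq (count_mem (j.+1 :: L) \o (fun i => [seq i.+1 :: L0 | L0 <- compsF f (n - i.+1)])) i
           | i <- iota 0 n] = [seq (i == j) * (all (fun a => 0 < a) L && (sumn L == n - j.+1)) | i <- iota 0 n].
  apply: eq_map => i /=; rewrite count_map.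
  have -> : count (preim (cons i.+1) (pred1 (j.+1 :: L))) (compsF f (n - i.+1)) =
            (i == j) * count_mem L (compsF f (n - i.+1)).
    case: (eqVneq i j) => [->|ij]; first by rewrite mul1n; apply: eq_count => x /=; rewrite eqseq_cons eqxx.
    rewrite mul0n; apply: count0 => x /=.
    by rewrite eqseq_cons eqSS (negbTE ij).
  case: (eqVneq i j) => [->|ij]; last by rewrite !mul0n.
  rewrite !mul1n IH //; lia.
rewrite (@sumn_pick _ j (fun _ => nat_of_bool (all (fun a => 0 < a) L && (sumn L == n - j.+1)))) ?iota_uniq // mem_iota add0n /=.
case: (ltnP j n) => jn /=; last first.
  rewrite mul0n; case: eqP; last by rewrite andbF.
  by move=> e; move: jn; rewrite -e ltnNge leq_addr.
rewrite mul1n; congr (_ && _).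
by apply/eqP/eqP => e; lia.
Qed.

End MC.
Import MC.

Module MD.
Set Implicit Arguments. Unset Strict Implicit. Unset Printing Implicit Defensive.
Import GRing.Theory.
Local Open Scope ring_scope.

Section Main.
Variables (F : fieldType) (m : nat).
Hypothesis hm : (0 < m)%N.

Definition G (t : nat) : F := (m %| t)%N%:R.
Definition dd (t : nat) : F := G t - ((0 < t)%N && (m %| t.-1)%N)%:R.

Lemma tele a b : (a <= b)%N ->
  \sum_(a <= t < b.+1) dd t = G b - ((0 < a)%N && (m %| a.-1)%N)%:R.
Proof.
elim: b => [|b IH].
  by rewrite leqn0 => /eqP ->; rewrite big_nat1 /dd.
rewrite leq_eqVlt => /orP[/eqP ->|ab]; first by rewrite big_nat1.
rewrite big_nat_recr //.
rewrite (IH ab) /dd /G /=; ring.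
exact: leqW.
Qed.

Lemma Qzero k : (0 < k)%N -> \sum_(0 <= i < k.+1) ((k - i < m)%N%:R * dd i) = 0.
Proof.
move=> k0; set a := (k.+1 - m)%N.
have ak : (a <= k)%N by rewrite /a; lia.
rewrite (big_cat_nat (leq0n a) (leqW ak)) /=.
rewrite big_nat big1 ?add0r; last first.
  move=> i /andP[_ ia]; have -> : (k - i < m)%N = false by rewrite /a in ia; lia.
  by rewrite mul0r.
rewrite (@eq_big_nat _ _ _ _ _ _ dd); last first.
  move=> i /andP[ai ik]; have -> : (k - i < m)%N by rewrite /a in ai; lia.
  by rewrite mul1r.
rewrite tele // /G.
case: (leqP m k) => mk.
  have -> : a.-1 = (k - m)%N by rewrite /a; lia.
  have -> : (0 < a)%N by rewrite /a; lia.
  by rewrite dvdn_subl // subrr.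
have -> : (0 < a)%N = false by rewrite /a; lia.
have -> : (m %| k)%N = false.
  by apply/negP => /(dvdn_leq k0); rewrite leqNgt mk.
by rewrite subrr.
Qed.

Lemma cnt t K : (t < K)%N -> \sum_(n < K) ((t == m * n)%N%:R : F) = (m %| t)%N%:R.
Proof.
move=> tK; case: (boolP (m %| t)%N) => [/dvdnP [q eq]|nd].
  have qK : (q < K)%N by apply: leq_ltn_trans tK; rewrite eq leq_pmulr.
  rewrite (bigD1 (Ordinal qK)) //= eq mulnC eqxx big1 ?addr0 // => i ne.
  rewrite eqn_pmul2l //; case: eqP => // e.
  by case/eqP: ne; apply: val_inj => /=; rewrite e.
rewrite big1 // => i _; case: eqP => // e; move: nd; by rewrite e dvdn_mulr ?dvdnn.
Qed.

Lemma sum_hdiffE w : sum_hdiff F m w = (sorted leq w)%:R * dd (size w).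
Proof.
rewrite /sum_hdiff /hser sumrB /dd /G mulrBr.
congr (_ - _).
  rewrite -(@cnt _ (size w).+1) // mulr_sumr; apply: eq_bigr => i _.
  by rewrite -natrM mulnb andbC.
case: (posnP (size w)) => [s0|s0].
  rewrite s0 /= mulr0; apply: big1 => i _; by [].
rewrite /= -(@cnt (size w).-1 (size w).+1); last by rewrite ltnS leq_pred.
rewrite mulr_sumr; apply: eq_bigr => i _; rewrite -natrM mulnb andbC; congr (_ && _)%:R.
by case: (size w) s0 i => // s _ i; rewrite eqSS.
Qed.

Lemma sum_ind (s : seq (seq nat)) (Q : pred (seq nat)) x :
  \sum_(i <- s | Q i) ((i == x)%:R : F) = (count (fun i => Q i && (i == x)) s)%:R.
Proof.
elim: s => [|a s IH]; first by rewrite big_nil.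
by rewrite big_cons IH /= natrD; case: (Q a); rewrite /= ?add0r.
Qed.

Lemma sum_rLE w : sum_rL F m w = (all (fun p => p < m)%N (runs w))%:R.
Proof.
rewrite /sum_rL big_seq_cond (eq_bigr (fun L => (L == runs w)%:R)); last first.
  move=> L /andP[Lin _]; rewrite rserE.
  have : (0 < count_mem L (compositions (size w)))%N by rewrite -has_count has_pred1.
  rewrite /compositions comps_count // lt0b => /andP[pL _].
  case: (eqVneq L (runs w)) => [->|ne]; first by rewrite cond_runs2.
  case c: (cond L w) => //; by rewrite (cond_runs pL c) eqxx in ne.
rewrite sum_ind.
set x := runs w; set s := compositions (size w).
have xs : count_mem x s = 1%N.
  rewrite /s /compositions comps_count // runs_pos /=.
  by have /and3P[/eqP e _ _] := cond_runs2 w; rewrite /x -e eqxx.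
case P: (all (fun p => p < m)%N x).
  transitivity ((count_mem x s)%:R : F); last by rewrite xs.
  congr (_%:R); apply: eq_count => L /=.
  by case: (eqVneq L x) => [->|]; rewrite ?andbF ?P ?andbT //= -has_pred1 has_count xs.
rewrite count0 // => L.
by case: (eqVneq L x) => [->|_]; rewrite ?P ?eqxx ?andbF ?andbT.
Qed.
End Main.

End MD.
Import MD.

Module ME.
Set Implicit Arguments. Unset Strict Implicit. Unset Printing Implicit Defensive.
Import GRing.Theory.
Local Open Scope ring_scope.

Lemma last_indep (s : seq nat) x y : s != [::] -> last x s = last y s.
Proof. by case: s. Qed.

Lemma unsorted_cat (s r : seq nat) : s != [::] -> r != [::] ->
  (head 0%N r < last 0%N s)%N -> sorted leq (s ++ r) = false.
Proof.
case: s => [|a s] // _; case: r => [|b r] // _ /= H.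
rewrite cat_path /= andbC; apply/negbTE.
by rewrite leqNgt H.
Qed.

Lemma last_drop (p : seq nat) i : (i < size p)%N -> last 0%N (drop i p) = last 0%N p.
Proof.
move=> ip; rewrite -{2}(cat_take_drop i p) last_cat; apply: last_indep.
by rewrite -size_eq0 size_drop subn_eq0 -ltnNge.
Qed.

Lemma R_left m (p r : seq nat) i : (0 < m)%N -> sorted leq r -> (i <= size r)%N ->
  (p == [::]) || (head 0%N r < last 0%N p)%N ->
  all (fun a => a < m)%N (runs (p ++ take i r)) = all (fun a => a < m)%N (runs p) && (i < m)%N.
Proof.
move=> hm sr ir hp; case: (posnP i) => [->|i0]; first by rewrite take0 cats0 hm andbT.
have tn : take i r != [::] by rewrite -size_eq0 size_takel // -lt0n.
rewrite runs_cat; last first.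
  case: (eqVneq p [::]) hp => [->//|pn /= hp]; by rewrite head_take // hp orbT.
have st : sorted leq (take i r) by apply: take_sorted sr; exact: leq_trans.
by rewrite all_cat (runs_sorted tn st) /= size_takel // andbT.
Qed.

Lemma R_right m (u v : seq nat) i : (0 < m)%N -> sorted leq u -> (i <= size u)%N ->
  (v == [::]) || (head 0%N v < last 0%N u)%N ->
  all (fun a => a < m)%N (runs (drop i u ++ v)) = (size u - i < m)%N && all (fun a => a < m)%N (runs v).
Proof.
move=> hm su iu hv; case: (ltnP i (size u)) => [iu'|ui]; last first.
  have -> : i = size u by apply/eqP; rewrite eqn_leq iu ui.
  by rewrite drop_size subnn hm.
have dn : drop i u != [::] by rewrite -size_eq0 size_drop subn_eq0 -ltnNge.
rewrite runs_cat; last first.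
  case: (eqVneq v [::]) hv => [->|vn /= hv]; first by rewrite orbT.
  by rewrite last_drop // hv !orbT.
have sd : sorted leq (drop i u) by apply: drop_sorted su; exact: leq_trans.
by rewrite all_cat (runs_sorted dn sd) /= size_drop andbT.
Qed.

Lemma natr_andb (F : fieldType) (a b : bool) : ((a && b)%:R : F) = a%:R * b%:R.
Proof. by case: a; case: b; rewrite /= ?mul1r ?mul0r. Qed.

Lemma dropl_cat (s1 s2 : seq nat) i : (i <= size s1)%N -> drop i (s1 ++ s2) = drop i s1 ++ s2.
Proof.
rewrite drop_cat; case: ltngtP => // -> _.
by rewrite subnn drop0 drop_size.
Qed.


End ME.
Import ME.

Local Open Scope ring_scope.

Theorem corollary12 (F : fieldType) (hF : [pchar F] =i pred0) (m : nat) (hm : (0 < m)%N) :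
  (forall w, smul (sum_rL F m) (sum_hdiff F m) w = sone F w) /\
  (forall w, smul (sum_hdiff F m) (sum_rL F m) w = sone F w).
Proof.
split => w; rewrite /smul /sone.
  case: (eqVneq w [::]) => [->|wn].
    rewrite big_ord_recl big_ord0 addr0 /= sum_rLE (sum_hdiffE _ hm) /dd /G /=.
    by rewrite dvdn0 subr0 !mul1r.
  have [p [r [E rn sr hp]]] := last_run wn.
  rewrite -(big_mkord xpredT (fun i => sum_rL F m (take i w) * sum_hdiff F m (drop i w))).
  have pw : (size p <= (size w).+1)%N by rewrite E size_cat leqW // leq_addr.
  rewrite (big_cat_nat (leq0n (size p)) pw) /=.
  rewrite big_nat big1 ?add0r; last first.
    move=> i /andP[_ ip]; rewrite (sum_hdiffE _ hm) E drop_cat ip unsorted_cat ?mul0r ?mulr0 //.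
      by rewrite -size_eq0 size_drop subn_eq0 -ltnNge.
    rewrite last_drop //; case: (eqVneq p [::]) hp => [pn|//]; by rewrite pn in ip.
  rewrite -{1}(add0n (size p)) big_addn.
  have -> : ((size w).+1 - size p = (size r).+1)%N.
    by rewrite E size_cat -addnS addKn.
  transitivity (\sum_(0 <= i < (size r).+1) (all (fun a => a < m)%N (runs p))%:R *
     ((i < m)%N%:R * dd F m (size r - i))).
    apply: eq_big_nat => i /andP[_ ir].
    rewrite E take_cat drop_cat ltnNge leq_addl /= addnK sum_rLE (sum_hdiffE _ hm).
    rewrite R_left // drop_sorted ?size_drop //.
    by rewrite natr_andb mulr1n mul1r mulrA.
  rewrite -mulr_sumr big_nat_rev /=.
  rewrite (@eq_big_nat _ _ _ _ _ _ (fun i => (size r - i < m)%N%:R * dd F m i)); last first.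
    move=> i /andP[_ ir]; rewrite add0n subSS subKn //.
  rewrite Qzero ?mulr0 //; by rewrite lt0n size_eq0.
case: (eqVneq w [::]) => [->|wn].
  rewrite big_ord_recl big_ord0 addr0 /= sum_rLE (sum_hdiffE _ hm) /dd /G /=.
  by rewrite dvdn0 subr0 !mul1r.
have [u [v [E un su hv]]] := first_run wn.
rewrite -(big_mkord xpredT (fun i => sum_hdiff F m (take i w) * sum_rL F m (drop i w))).
have uw : ((size u).+1 <= (size w).+1)%N by rewrite E size_cat ltnS leq_addr.
rewrite (big_cat_nat (leq0n _) uw) /=.
rewrite [X in _ + X]big_nat [X in _ + X]big1 ?addr0; last first.
  move=> i /andP[ui iw]; rewrite (sum_hdiffE _ hm) E take_cat ltnNge (ltnW ui) /=.
  have tn : take (i - size u) v != [::].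
    rewrite -size_eq0 size_take_min; move: iw ui; rewrite E size_cat => iw ui.
    rewrite /minn; case: ifP => _; rewrite -lt0n ?subn_gt0 //.
    by case: (size v) iw => //; rewrite addn0 ltnS leqNgt ui.
  rewrite unsorted_cat ?mul0r //; case: (eqVneq v [::]) hv => [vn|_ /= hv]; last by rewrite head_take // subn_gt0.
  by move: tn; rewrite vn.
transitivity (\sum_(0 <= i < (size u).+1) (all (fun a => a < m)%N (runs v))%:R *
   ((size u - i < m)%N%:R * dd F m i)).
  apply: eq_big_nat => i /andP[_ iu]; rewrite ltnS in iu.
  rewrite E takel_cat // dropl_cat // sum_rLE (sum_hdiffE _ hm) R_right //.
  rewrite take_sorted // size_takel // natr_andb mulr1n mul1r.
  ring.
rewrite -mulr_sumr Qzero ?mulr0 //; by rewrite lt0n size_eq0.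
Qed.
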